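(* Let $V$ be a finite nonempty set, $c\in\mathbb{R}^{P_V}$ and $\hat x$ a maximally specific partial function on $P_V$. Define $x^+\in\{0,1\}^{P_V}$ by $x^+_e=1$ if $e\notin\operatorname{dom}(\hat x)$ and $c_e\ge0$; $x^+_e=0$ if $e\notin\operatorname{dom}(\hat x)$ and $c_e<0$; $x^+_e=\hat x_e$ if $e\in\operatorname{dom}(\hat x)$. Let $ij\in P_V\setminus\operatorname{dom}(\hat x)$ with $c_{ij}\ge0$. If $x^+\in X_V[\hat x]$, then $$\max_{x\in X_V[\hat x],\,x_{ij}=1}\varphi_c(x)=\varphi_c(x^+),$$ and, writing $\mathcal U=\{U\subseteq V\mid ij\in U\times(V\setminus U),\ (U\times(V\setminus U))\cap\hat x^{-1}(1)=\emptyset\}$ and $\sigma_U(x)$ for the vector with $\sigma_U(x)_{pq}=0$ if $pq\in U\times(V\setminus U)$ and $\sigma_U(x)_{pq}=x_{pq}$ otherwise, $$\max_{x\in X_V[\hat x],\,x_{ij}=0}\varphi_c(x)=\max_{U\in\mathcal U}\varphi_c(\sigma_U(x^+))=\varphi_c(x^+)-\min_{U\in\mathcal U}\sum_{pq\in(U\times(V\setminus U))\setminus\hat x^{-1}(0)}c_{pq}^+ .$$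
   Context: $P_V=\{pq\in V^2\mid p\neq q\}$; $X_V$ is the set of $x\in\{0,1\}^{P_V}$ with $x_{pq}+x_{qr}-x_{pr}\le 1$ for all pairwise distinct $p,q,r\in V$; $\varphi_c(x)=\sum_{pq\in P_V}c_{pq}x_{pq}$. A partial function $\tilde x$ is a map from $\operatorname{dom}(\tilde x)\subseteq P_V$ to $\{0,1\}$, $\tilde x^{-1}(b)$ the pairs mapped to $b$, and $X_V[\tilde x]=\{x\in X_V\mid x_{pq}=\tilde x_{pq}\ \forall pq\in\operatorname{dom}(\tilde x)\}$. A pair $pq$ is decided if $x_{pq}=x'_{pq}$ for all $x,x'\in X_V[\tilde x]$; $\tilde x$ is maximally specific if $X_V[\tilde x]\ne\emptyset$ and the decided pairs are exactly $\operatorname{dom}(\tilde x)$. For real $a$, $a^+=\max(a,0)$. *)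

(* Defs.v *)
From mathcomp Require Import all_boot all_order all_algebra.
Set Implicit Arguments. Unset Strict Implicit. Unset Printing Implicit Defensive.
Import Order.TTheory GRing.Theory Num.Theory.
Local Open Scope ring_scope.

Definition P (V : finType) := {pq : V * V | pq.1 != pq.2}.

Definition pair_of (V : finType) (p q : V) (h : p != q) : P V :=
  @exist _ (fun pq : V * V => pq.1 != pq.2) (p, q) h.

Definition in_X (V : finType) (x : {ffun P V -> bool}) : Prop :=
  forall (p q r : V) (hpq : p != q) (hqr : q != r) (hpr : p != r),
    (x (pair_of hpq) + x (pair_of hqr) <= 1 + x (pair_of hpr))%N.

(* partial functions P_V -> {0,1}: None = not in the domain *)
Definition partial (V : finType) := {ffun P V -> option bool}.

Definition in_Xr (V : finType) (xh : partial V) (x : {ffun P V -> bool}) : Prop :=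
  in_X x /\ forall e b, xh e = Some b -> x e = b.

Definition decided (V : finType) (xh : partial V) (e : P V) : Prop :=
  forall x x', in_Xr xh x -> in_Xr xh x' -> x e = x' e.

Definition maximally_specific (V : finType) (xh : partial V) : Prop :=
  (exists x, in_Xr xh x) /\ forall e, decided xh e <-> xh e != None.

Definition phi (R : realFieldType) (V : finType) (c : P V -> R)
  (x : {ffun P V -> bool}) : R := \sum_(e : P V) c e * (x e)%:R.

Definition xplus (R : realFieldType) (V : finType) (c : P V -> R) (xh : partial V)
  : {ffun P V -> bool} :=
  [ffun e => match xh e with Some b => b | None => 0 <= c e end].

Definition cut (V : finType) (U : {set V}) (e : P V) : bool :=
  ((val e).1 \in U) && ((val e).2 \notin U).

Definition sigmaU (V : finType) (U : {set V}) (x : {ffun P V -> bool})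
  : {ffun P V -> bool} := [ffun e => if cut U e then false else x e].

Definition calU (V : finType) (xh : partial V) (ij : P V) (U : {set V}) : Prop :=
  cut U ij /\ forall e, cut U e -> xh e != Some true.

Definition is_max (R : realFieldType) (T : Type) (S : T -> Prop) (f : T -> R) (m : R)
  : Prop := (exists2 t, S t & f t = m) /\ forall t, S t -> f t <= m.
Definition is_min (R : realFieldType) (T : Type) (S : T -> Prop) (f : T -> R) (m : R)
  : Prop := (exists2 t, S t & f t = m) /\ forall t, S t -> m <= f t.

(* Main.v *)
Require Import Defs.
From mathcomp Require Import all_boot all_order all_algebra.
From mathcomp Require Import lra.
Set Implicit Arguments. Unset Strict Implicit. Unset Printing Implicit Defensive.
Import Order.TTheory GRing.Theory Num.Theory.
Local Open Scope ring_scope.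

Section Aux.
Variables (R : realFieldType) (V : finType) (c : P V -> R) (xh : partial V).

Lemma pair_ofE (e : P V) p q (h : p != q) : val e = (p, q) -> e = pair_of h.
Proof. by move=> E; apply: val_inj. Qed.

Definition Ssum (U : {set V}) : R :=
  \sum_(e : P V | cut U e && (xh e != Some false)) Num.max (c e) 0.

Lemma term_le (x : {ffun P V -> bool}) e :
  (forall b, xh e = Some b -> x e = b) ->
  c e * (x e)%:R <= c e * (xplus c xh e)%:R.
Proof.
move=> H; rewrite /xplus ffunE; case E: (xh e) => [b|].
  by rewrite (H b E).
case: (x e); case: (leP 0 (c e)) => h //=; rewrite ?mulr1 ?mulr0 //; lra.
Qed.

Lemma phi_le (x : {ffun P V -> bool}) :
  (forall e b, xh e = Some b -> x e = b) -> phi c x <= phi c (xplus c xh).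
Proof. by move=> H; apply: ler_sum => e _; apply: term_le => b; apply: H. Qed.

Lemma phi_sigma U : (forall e, cut U e -> xh e != Some true) ->
  phi c (sigmaU U (xplus c xh)) = phi c (xplus c xh) - Ssum U.
Proof.
move=> H; rewrite /Ssum big_mkcond /phi -sumrB; apply: eq_bigr => e _.
rewrite /sigmaU /xplus !ffunE.
case C: (cut U e) => /=; last by rewrite subr0.
move: (H e C); case: (xh e) => [[]|] //= _.
  by rewrite mulr0 subrr.
case: (leP 0 (c e)) => h; rewrite ?mulr1 ?mulr0.
  by rewrite ?max_l ?subrr.
by rewrite subrr.
Qed.
End Aux.

Section Aux2.
Variables (R : realFieldType) (V : finType) (c : P V -> R) (xh : partial V).

Lemma sigma_feas U : (forall e, cut U e -> xh e != Some true) ->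
  in_Xr xh (xplus c xh) -> in_Xr xh (sigmaU U (xplus c xh)).
Proof.
move=> HU; move: (xplus c xh) => X [Hx Hc]; split.
  move=> p q r hpq hqr hpr; have := Hx p q r hpq hqr hpr.
  rewrite /sigmaU !ffunE /cut /=.
  case: (p \in U); case: (q \in U); case: (r \in U);
  case: (X (pair_of hpq)); case: (X (pair_of hqr));
  by case: (X (pair_of hpr)).
move=> e b H; rewrite /sigmaU ffunE; case C: (cut U e); last exact: Hc.
by have := HU e C; rewrite H; move: H; case: b.
Qed.

Definition Ux (i : V) (x : {ffun P V -> bool}) : {set V} :=
  [set p | (p == i) || [exists e : P V, (val e == (i, p)) && x e]].

Lemma Ux_cut {i : V} {x : {ffun P V -> bool}} : in_X x -> forall e, cut (Ux i x) e -> x e = false.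
Proof.
move=> Hx [[p q] hpq]; rewrite /cut /= !inE => /andP [Hp Hq].
apply/negbTE/negP => xe; move/negP: Hq; apply.
case/orP: Hp => [/eqP pi | /existsP [[[a b] h] /andP [/eqP ve' xe']]].
  subst p; apply/orP; right; apply/existsP; exists (exist _ (i, q) hpq).
  by rewrite eqxx.
move: ve' => /= [ai bp]; subst a b.
case qi: (q == i); first by [].
have hiq : i != q by rewrite eq_sym qi.
have := Hx i p q h hpq hiq.
change (x (pair_of h)) with (x (exist _ (i, p) h)).
change (x (pair_of hpq)) with (x (exist _ (p, q) hpq)).
rewrite xe' xe; case E: (x (pair_of hiq)) => // _.
by apply/existsP; exists (pair_of hiq); rewrite eqxx E.
Qed.

Lemma Ux_calU (ij : P V) x : in_Xr xh x -> x ij = false ->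
  calU xh ij (Ux (val ij).1 x).
Proof.
move=> [Hx Hc] Hij; split.
  rewrite /cut !inE eqxx /=; apply/negP => /orP [/eqP E|].
    by move: (valP ij); rewrite /= E eqxx.
  move=> /existsP [e /andP [/eqP ve xe]].
  have : e = ij by apply: val_inj; move: ve => /= ->; case: (val ij) => ? ?.
  by move=> E; move: xe; rewrite E Hij.
move=> e C; apply/negP => /eqP E.
by move: (Ux_cut Hx C); rewrite (Hc _ _ E).
Qed.

Lemma Ux_le (i : V) x : in_Xr xh x ->
  phi c x <= phi c (sigmaU (Ux i x) (xplus c xh)).
Proof.
move=> [Hx Hc]; apply: ler_sum => e _; rewrite /sigmaU ffunE.
case C: (cut _ e); first by rewrite (Ux_cut Hx C) mulr0.
by apply: term_le => b; apply: Hc.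
Qed.

Definition calUb (ij : P V) (U : {set V}) : bool :=
  cut U ij && [forall e, cut U e ==> (xh e != Some true)].

Lemma calUP ij U : calU xh ij U <-> calUb ij U.
Proof.
split.
  by move=> [H1 H2]; rewrite /calUb H1; apply/forallP => e; apply/implyP; apply: H2.
by move=> /andP [H1 /forallP H2]; split => // e; apply/implyP; apply: H2.
Qed.
End Aux2.

Theorem proposition7p2 (R : realFieldType) (V : finType) (HV : (0 < #|V|)%N)
  (c : P V -> R) (xh : partial V) (ij : P V) :
  maximally_specific xh ->
  xh ij = None -> 0 <= c ij ->
  in_Xr xh (xplus c xh) ->
  is_max (fun x => in_Xr xh x /\ x ij = true) (phi c) (phi c (xplus c xh))
  /\ exists m : R,
       is_min (calU xh ij)
         (fun U => \sum_(e : P V | cut U e && (xh e != Some false)) Num.max (c e) 0) m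
    /\ is_max (fun x => in_Xr xh x /\ x ij = false) (phi c) (phi c (xplus c xh) - m)
    /\ is_max (calU xh ij) (fun U => phi c (sigmaU U (xplus c xh)))
              (phi c (xplus c xh) - m).
Proof.
move=> [_ MS] Hij Hc Hxp.
have Hxpij : xplus c xh ij = true by rewrite /xplus ffunE Hij.
split.
  split; first by exists (xplus c xh).
  by move=> x [[_ H] _]; apply: phi_le.
have [U0 HU0] : exists U, calUb xh ij U.
  case E: [exists U, calUb xh ij U]; first by apply/existsP.
  exfalso.
  have Hall : forall y, in_Xr xh y -> y ij = true.
    move=> y Hy; case Ey: (y ij) => //.
    move: E => /negbT /existsP; case; exists (Ux (val ij).1 y).
    by apply/calUP; apply: Ux_calU.
  have D : decided xh ij by move=> x x' Hx Hx'; rewrite !Hall.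
  by move: ((MS ij).1 D); rewrite Hij.
have HcalU : forall U, calU xh ij U -> forall e, cut U e -> xh e != Some true.
  by move=> U [].
case: (arg_minP (Ssum c xh) HU0) => Um /calUP HUm Hmin.
exists (Ssum c xh Um); split.
  split; first by exists Um.
  by move=> U /calUP HU; apply: Hmin.
split; split.
- exists (sigmaU Um (xplus c xh)); last by rewrite phi_sigma //; apply: HcalU.
  split; first by apply: sigma_feas => //; apply: HcalU.
  by rewrite /sigmaU ffunE (proj1 HUm).
- move=> x [Hx Hx0].
  apply: (le_trans (Ux_le c (val ij).1 Hx)).
  have HU := Ux_calU Hx Hx0.
  rewrite phi_sigma; last exact: HcalU HU.
  by rewrite lerB // Hmin //; apply/calUP.
- by exists Um => //; rewrite phi_sigma //; apply: HcalU.
- move=> U HU; rewrite phi_sigma; last exact: HcalU HU.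
  by rewrite lerB // Hmin //; apply/calUP.
Qed.
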